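(* Let $n\geqslant 2$ be an integer. Every tournament $T$ with $2n$ vertices that embeds a transitive tournament with $2n-1$ vertices is decomposable.
   Context: A tournament $T=(V,A)$ is a finite set $V$ with a set $A$ of ordered pairs of distinct vertices such that for all $x\neq y$, exactly one of $(x,y),(y,x)$ lies in $A$; write $x\to y$ for $(x,y)\in A$. For $X\subseteq V$, $T[X]$ is the induced subtournament. $T$ embeds $T'$ if $T'$ is isomorphic to an induced subtournament of $T$. A tournament is transitive if $x\to y$ and $y\to z$ imply $x\to z$. A subset $I\subseteq V$ is an interval of $T$ if for every $x\in V\setminus I$, either $x\to a$ for all $a\in I$ or $a\to x$ for all $a\in I$. The sets $\varnothing$, $V$ and singletons are trivial intervals. A tournament with at least 3 vertices is indecomposable if all its intervals are trivial, and decomposable otherwise. *)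

(* Defs.v *)
From mathcomp Require Import all_boot.
Set Implicit Arguments. Unset Strict Implicit. Unset Printing Implicit Defensive.

Definition is_tournament (V : finType) (arc : rel V) : Prop :=
  (forall x, ~~ arc x x) /\
  (forall x y, x != y -> (arc x y && ~~ arc y x) || (arc y x && ~~ arc x y)).

Definition is_transitive (V : finType) (arc : rel V) : Prop :=
  forall x y z, arc x y -> arc y z -> arc x z.

Definition embeds (V W : finType) (arc : rel V) (arc' : rel W) : Prop :=
  exists f : W -> V, injective f /\ forall a b, arc (f a) (f b) = arc' a b.

Definition is_interval (V : finType) (arc : rel V) (I : {set V}) : Prop :=
  forall x, x \notin I ->
    (forall a, a \in I -> arc x a) \/ (forall a, a \in I -> arc a x).

Definition trivial_set (V : finType) (I : {set V}) : Prop :=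
  I = set0 \/ I = [set: V] \/ exists v, I = [set v].

Definition decomposable (V : finType) (arc : rel V) : Prop :=
  3 <= #|V| /\ exists I : {set V}, is_interval arc I /\ ~ trivial_set I.

(* Main.v *)
Require Import Defs.
From mathcomp Require Import all_boot.
From mathcomp Require Import zify.

Lemma tneg (V : finType) (arc : rel V) : is_tournament arc ->
  forall a b, a != b -> arc a b = ~~ arc b a.
Proof.
move=> [_ H] a b /H; by case: (arc a b); case: (arc b a).
Qed.

Lemma key (V : finType) (arc : rel V) (x : V) (s : seq V) :
  is_tournament arc -> uniq s -> x \notin s -> #|V| = (size s).+1 ->
  3 <= size s -> odd (size s) ->
  (forall i j, i < j -> j < size s -> arc (nth x s i) (nth x s j)) ->
  decomposable arc.
Proof.
move=> hT us xs hV h3 hodd hpw.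
set m := size s in hV h3 hodd hpw.
set v := fun i => nth x s i.
have hTn := @tneg V arc hT.
have hall : forall y, y = x \/ exists2 i, i < m & y = v i.
  move=> y; case: (eqVneq y x) => [->|ne]; first by left.
  right; case: (boolP (y \in s)) => ys.
    by exists (index y s); [rewrite index_mem | rewrite /v nth_index].
  exfalso.
  have u : uniq (y :: x :: s) by rewrite /= inE negb_or ne ys xs us.
  have := max_card (mem (y :: x :: s)); rewrite (card_uniqP u) /= hV; lia.
have vx : forall i, i < m -> v i != x.
  move=> i im; apply/eqP => e; move: xs; by rewrite -e mem_nth.
have vinj : forall i j, i < m -> j < m -> v i = v j -> i = j.
  by move=> i j im jm /eqP; rewrite /v nth_uniq // => /eqP.
have pw : forall i j, i < j -> j < m -> arc (v i) (v j) by [].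
split; first by rewrite hV; lia.
have [[i [hi heq]] | [h0 | hl]] :
  (exists i, i.+1 < m /\ arc x (v i) = arc x (v i.+1)) \/ arc x (v 0) = false
   \/ arc x (v m.-1) = true.
  case: (boolP [exists i : 'I_m, (i.+1 < m) && (arc x (v i) == arc x (v i.+1))]).
    by move/existsP => [i /andP [h /eqP e]]; left; exists i.
  move=> /existsPn hn; right.
  case e0: (arc x (v 0)); last by left.
  right.
  have alt : forall k, k < m -> arc x (v k) = ~~ odd k.
    elim=> [//|k IH] hk.
    have hk' : k < m by lia.
    have := hn (Ordinal hk'); rewrite /= hk /= (IH hk') => hne.
    by rewrite /= ; move: hne; case: (arc x (v k.+1)); case: (odd k).
  rewrite alt; last by lia.
  by case: m hodd h3 {hpw hall vx vinj pw hn alt hV} => //= k ->.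
- exists [set v i; v i.+1]; split.
  + move=> y; rewrite !inE => /norP [n1 n2].
    case: (hall y) => [->|[j jm ey]].
      case e: (arc x (v i)).
        by left => a; rewrite !inE => /orP [] /eqP ->; rewrite -?heq.
      right => a; rewrite !inE => /orP [] /eqP ->.
        by rewrite hTn ?e // vx //; lia.
      by rewrite hTn ?vx // -?heq ?e.
    have ji : j != i by apply/eqP => e; move: n1; rewrite ey e eqxx.
    have ji1 : j != i.+1 by apply/eqP => e; move: n2; rewrite ey e eqxx.
    rewrite ey.
    case: (ltnP j i) => hj.
      by left => a; rewrite !inE => /orP [] /eqP ->; apply: pw; lia.
    by right => a; rewrite !inE => /orP [] /eqP ->; apply: pw; lia.
  + case=> [|[]].
    * by move/setP => /(_ (v i)); rewrite !inE eqxx.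
    * move/setP => /(_ x); rewrite !inE => h; have : (x == v i) || (x == v i.+1) by rewrite h.
      case/orP => /eqP e.
        by move: (vx i); rewrite -e eqxx; lia.
      by move: (vx i.+1); rewrite -e eqxx; lia.
    * move=> [w /setP hw]; have := hw (v i); have := hw (v i.+1).
      rewrite !inE !eqxx orbT => h1 h2.
      have e1 : v i.+1 = w by apply/eqP; rewrite -h1.
      have e2 : v i = w by apply/eqP; rewrite -h2.
      have := vinj i i.+1; rewrite e1 e2 => /(_ _ _ erefl); lia.
- exists (~: [set v 0]); split.
  + move=> y; rewrite !inE negbK => /eqP ->; left => a; rewrite !inE => ne.
    case: (hall a) => [->|[j jm ej]].
      by rewrite hTn ?h0 // vx //; lia.
    rewrite ej; apply: pw => //; case: j jm ej => // _ e; by move: ne; rewrite e eqxx.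
  + case=> [|[]].
    * by move/setP => /(_ x); rewrite !inE eq_sym vx //; lia.
    * by move/setP => /(_ (v 0)); rewrite !inE eqxx.
    * move=> [w /setP hw]; have := hw x; have := hw (v 1).
      rewrite !inE.
      have n10 : v 1 != v 0 by apply/eqP => /vinj; lia.
      have x0 : x != v 0 by rewrite eq_sym vx //; lia.
      rewrite n10 x0 => h1 h2.
      have e1 : v 1 = w by apply/eqP; rewrite -h1.
      have e2 : x = w by apply/eqP; rewrite -h2.
      by move: (vx 1); rewrite e1 e2 eqxx; lia.
- exists (~: [set v m.-1]); split.
  + move=> y; rewrite !inE negbK => /eqP ->; right => a; rewrite !inE => ne.
    case: (hall a) => [->|[j jm ej]]; first by [].
    rewrite ej; apply: pw; last lia.
    have : j != m.-1 by apply: contraNneq ne => e; rewrite ej e.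
    lia.
  + case=> [|[]].
    * by move/setP => /(_ x); rewrite !inE eq_sym vx //; lia.
    * by move/setP => /(_ (v m.-1)); rewrite !inE eqxx.
    * move=> [w /setP hw]; have := hw x; have := hw (v 0).
      rewrite !inE.
      have n10 : v 0 != v m.-1 by apply/eqP => /vinj; lia.
      have x0 : x != v m.-1 by rewrite eq_sym vx //; lia.
      rewrite n10 x0 => h1 h2.
      have e1 : v 0 = w by apply/eqP; rewrite -h1.
      have e2 : x = w by apply/eqP; rewrite -h2.
      by move: (vx 0); rewrite e1 e2 eqxx; lia.
Qed.

Theorem mainTheorem1 (n : nat) (hn : 2 <= n) (V : finType) (arc : rel V) :
  is_tournament arc -> #|V| = 2 * n ->
  (exists arc' : rel 'I_(2 * n - 1),
      is_tournament arc' /\ is_transitive arc' /\ embeds arc arc') ->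
  decomposable arc.
Proof.
move=> hT hV [arc' [[irr' tot'] [tr' [f [finj hf]]]]].
set m := 2 * n - 1.
have m0 : 0 < m by rewrite /m; lia.
pose a0 : 'I_m := Ordinal m0.
pose le := fun a b : 'I_m => (a == b) || arc' a b.
have letot : total le.
  move=> a b; rewrite /le; case: (eqVneq a b) => [->|ne] //=.
  by have := tot' a b ne; case: (arc' a b); case: (arc' b a).
have letr : transitive le.
  move=> b a c; rewrite /le => /orP [/eqP -> //|hab] /orP [/eqP <-|hbc].
    by rewrite hab orbT.
  by rewrite (tr' _ _ _ hab hbc) orbT.
set t := sort le (enum 'I_m).
have ut : uniq t by rewrite sort_uniq enum_uniq.
have st : size t = m by rewrite size_sort size_enum_ord.
have pt : pairwise le t by rewrite -sorted_pairwise // sort_sorted.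
set s := map f t.
have us : uniq s by rewrite map_inj_uniq.
have ss : size s = m by rewrite size_map.
have [x xs] : exists x, x \notin s.
  case: (boolP [exists x, x \notin s]) => [/existsP //|/existsPn h].
  have : #|V| <= #|s|.
    apply: subset_leq_card; apply/subsetP => y _; have := h y; by rewrite negbK.
  have := card_size s; rewrite ss hV /m; lia.
apply: (@key V arc x s hT us xs); rewrite ?ss ?hV /m; try lia.
move=> i j ij jm.
rewrite !(nth_map a0) ?st //; try lia.
rewrite hf.
move/(pairwiseP a0): pt => pt'; have := pt' i j; rewrite !inE st => /(_ ltac:(lia) ltac:(lia) ij).
rewrite /le => /orP [|//]; rewrite nth_uniq ?st //; lia.
Qed.
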